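(* Let $1\le l\le g$, $\beta\in\mathbb F_p^\times$ and $\alpha=\beta^2$. Then the sequence of polynomial functions $$J^{l,s}(x_1,\dots,x_{n-1})=x_1^{(p^s-1)/2}\,Q^{l,s}(x_2,\dots,x_{n-1}),\qquad s=1,2,\dots,$$ converges uniformly on $D_{\alpha,1}\times D_{0,1}^{n-2}$ to the function $\omega(\beta)\,J^l$, where $J^l(x_1,\dots,x_{n-1})=x_1^{-1/2}\,Q^l(x_2,\dots,x_{n-1})$.
   Context: Let $p$ be an odd prime, $g\ge1$, $n=2g+1$, $p>n$. $\mathbb Z_p$, $|\cdot|_p$ as usual. For $t\in\mathbb F_p$ (or $\mathbb Z_p$), $\omega(t)$ is the Teichmüller representative: the unique $\omega\in\mathbb Z_p$ with $\omega^p=\omega$, $\omega\equiv t\pmod p$. For $\gamma\in\mathbb F_p$, $D_{\gamma,1}=\{t\in\mathbb Z_p:|t-\omega(\gamma)|_p<1\}$. For $\beta\neq0$, $x_1^{1/2}:D_{\alpha,1}\to D_{\beta,1}$ denotes the inverse of the bijection $t\mapsto t^2$, $D_{\beta,1}\to D_{\alpha,1}$, and $x_1^{-1/2}=1/x_1^{1/2}$. Uniform convergence on $S$ means convergence in $\sup_S|\cdot|_p$ (coordinatewise). Binomials $\binom{y}{k}=y(y-1)\cdots(y-k+1)/k!$. For $a=(a_1,\dots,a_{n-1})$ write $X(a)=\prod_{i=2}^{n-2l}x_i^{a_{i-1}}\prod_{i=n-2l+1}^{n-1}x_i^{a_i}$. For a parameter $\mu$ define $Q^{l}[\mu]=(Q_1,\dots,Q_n)$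 by: for $1\le j\le n-2l-1$: $Q_j=x_{j+1}\sum\binom{\mu-1}{a_j}\prod_{i\ne j}\binom{\mu}{a_i}X(a)$ over $a$ with $a_1+\dots+a_{n-2l}=a_{n-2l+1}+\dots+a_{n-1}+l-1$; for $j=n-2l$: $Q_j=\sum\binom{\mu-1}{a_j}\prod_{i\ne j}\binom{\mu}{a_i}X(a)$ with the same condition ($l-1$); for $n-2l<j\le n-1$: $Q_j=\sum\binom{\mu-1}{a_j}\prod_{i\ne j}\binom{\mu}{a_i}X(a)$ over $a$ with $a_1+\dots+a_{n-2l}=a_{n-2l+1}+\dots+a_{n-1}+l$; $Q_n=\sum\prod_{i=1}^{n-1}\binom{\mu}{a_i}X(a)$ over $a$ with $a_1+\dots+a_{n-2l}=a_{n-2l+1}+\dots+a_{n-1}+l$. Here $\prod_{i\ne j}$ is over $i\in\{1,\dots,n-1\}\setminus\{j\}$. $Q^l$ is the formal power series $Q^l[-\tfrac12]$ (sum over all $a\in\mathbb Z_{\ge0}^{n-1}$; it has $p$-adic integer coefficients and converges on $D_{0,1}^{n-2}$), and $Q^{l,s}$ is the polynomial $Q^l[\tfrac{p^s-1}2]$ (sum over $a$ with $0\le a_i\le\frac{p^s-1}2$). *)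

(* Defs.v *)
(* p-adic integers are modelled concretely as coherent
   sequences of integer representatives: u : nat -> int with
   u (k+1) = u k (mod p^k); u k is a representative of u mod p^k, and
   |u - v|_p <= p^-k  iff  u k = v k (mod p^k). *)
From mathcomp Require Import all_boot all_algebra.
Set Implicit Arguments. Unset Strict Implicit. Unset Printing Implicit Defensive.
Import GRing.Theory Num.Theory.
Local Open Scope ring_scope.

Definition Zpad := nat -> int.

Definition pw (p k : nat) : int := (p ^ k)%N%:Z.

Definition eqmodp (p k : nat) (u v : Zpad) : bool := (u k == v k %[mod pw p k])%Z.

Definition coherent (p : nat) (u : Zpad) : Prop :=
  forall k, (u k.+1 == u k %[mod pw p k])%Z.

Definition Zeq (p : nat) (u v : Zpad) : Prop := forall k, eqmodp p k u v.

Definition Zmul (u v : Zpad) : Zpad := fun k => u k * v k.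
Definition Zcst (c : int) : Zpad := fun _ => c.

Definition gbin (y : rat) (m : nat) : rat :=
  (\prod_(i < m) (y - i%:R)) / (m`!)%:R.

Definition invmod (d m : int) : int := (egcdz d m).1.

(* the p-adic integer given by a rational with denominator prime to p *)
Definition rat_to_Zp (p : nat) (q : rat) : Zpad :=
  fun k => numq q * invmod (denq q) (pw p k).

(* a multi-index a = (a_1, ..., a_{m}) with entries <= N, from a finfun *)
Definition vec_of (m N : nat) (t : {ffun 'I_m -> 'I_N.+1}) (i : nat) : nat :=
  if i is i'.+1 then oapp (fun o : 'I_m => nat_of_ord (t o)) 0%N (insub i')
  else 0%N.

Definition boxsum (n N : nat) (F : (nat -> nat) -> int) : int :=
  \sum_(t : {ffun 'I_n.-1 -> 'I_N.+1}) F (vec_of t).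

Definition cond (n l c : nat) (a : nat -> nat) : bool :=
  (\sum_(1 <= i < (n - 2 * l).+1) a i == \sum_((n - 2 * l).+1 <= i < n) a i + c)%N.

Definition Xmon (n l : nat) (x : nat -> int) (a : nat -> nat) : int :=
  (\prod_(2 <= i < (n - 2 * l).+1) x i ^+ a i.-1) *
  (\prod_((n - 2 * l).+1 <= i < n) x i ^+ a i).

(* bin 0 m = binom(mu, m), bin 1 m = binom(mu - 1, m) *)
Definition coefQ (n : nat) (bin : nat -> nat -> int) (j : nat) (a : nat -> nat) : int :=
  if (j < n)%N then bin 1%N (a j) * \prod_(1 <= i < n | i != j) bin 0%N (a i)
  else \prod_(1 <= i < n) bin 0%N (a i).

Definition Qterm (n l : nat) (bin : nat -> nat -> int) (x : nat -> int)
    (j : nat) (a : nat -> nat) : int :=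
  let c := if (j <= n - 2 * l)%N then (l - 1)%N else l in
  if cond n l c a then
    (if (j < n - 2 * l)%N then x j.+1 else 1) * coefQ n bin j a * Xmon n l x a
  else 0.

(* Q^{l,s}_j(x_2..x_{n-1}) at level k (x indexed 1..n-1; x_1 unused) *)
Definition Qls (p n l s : nat) (x : nat -> Zpad) (j : nat) : Zpad := fun k =>
  let mu := ((p ^ s).-1)./2 in
  boxsum n mu (Qterm n l (fun e m => ('C(mu - e, m))%:R) (fun i => x i k) j).

Definition Jls (p n l s : nat) (x : nat -> Zpad) (j : nat) : Zpad := fun k =>
  x 1%N k ^+ (((p ^ s).-1)./2) * Qls p n l s x j k.

(* partial sum of the power series Q^l_j = Q^l[-1/2]_j over the box a_i <= N *)
Definition Ql_partial (p n l N : nat) (x : nat -> Zpad) (j : nat) : Zpad := fun k =>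
  boxsum n N (Qterm n l
    (fun e m => rat_to_Zp p (gbin (- (2%:R)^-1 - e%:R) m) k) (fun i => x i k) j).

Definition IsSeriesSum (p n l : nat) (x : nat -> Zpad) (j : nat) (v : Zpad) : Prop :=
  coherent p v /\
  forall k, exists N0, forall N, (N0 <= N)%N -> eqmodp p k (Ql_partial p n l N x j) v.

(* x in D_{alpha,1} x D_{0,1}^{n-2}  (|t - omega(alpha)|_p < 1 iff t = alpha mod p) *)
Definition inD (p n alpha : nat) (x : nat -> Zpad) : Prop :=
  (forall i, (0 < i < n)%N -> coherent p (x i)) /\
  eqmodp p 1 (x 1%N) (Zcst alpha%:Z) /\
  (forall i, (1 < i < n)%N -> eqmodp p 1 (x i) (Zcst 0)).

Definition IsTeich (p b : nat) (w : Zpad) : Prop :=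
  coherent p w /\ Zeq p (fun k => w k ^+ p) w /\ eqmodp p 1 w (Zcst b%:Z).

(* v = x_1^{-1/2} Q^l_j(x_2..x_{n-1}), where x_1^{1/2} is the square root
   lying in D_{b,1} *)
Definition IsJl (p n l b : nat) (x : nat -> Zpad) (j : nat) (v : Zpad) : Prop :=
  coherent p v /\
  exists r y q : Zpad,
    coherent p r /\ coherent p y /\ eqmodp p 1 r (Zcst b%:Z) /\
    Zeq p (Zmul r r) (x 1%N) /\ Zeq p (Zmul r y) (Zcst 1) /\
    IsSeriesSum p n l x j q /\ Zeq p v (Zmul y q).

(* Main.v *)
Require Import Defs.
From mathcomp Require Import all_boot all_algebra.
From mathcomp Require Import zify ring.
From Stdlib Require Import FunctionalExtensionality.
Set Implicit Arguments. Unset Strict Implicit. Unset Printing Implicit Defensive.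
Import GRing.Theory Num.Theory.
Local Open Scope ring_scope.

Definition cg (d a b : int) : bool := (d %| a - b)%Z.

Lemma cg_refl d a : cg d a a.
Proof. by rewrite /cg subrr dvdz0. Qed.
Lemma cg_sym d a b : cg d a b -> cg d b a.
Proof. by rewrite /cg => h; rewrite -opprB rpredN. Qed.
Lemma cg_trans d a b c : cg d a b -> cg d b c -> cg d a c.
Proof.
rewrite /cg => h1 h2; have -> : a - c = (a - b) + (b - c) by rewrite addrA subrK.
exact: rpredD.
Qed.
Lemma cgD d a b a' b' : cg d a a' -> cg d b b' -> cg d (a + b) (a' + b').
Proof.
rewrite /cg => h1 h2; have -> : a + b - (a' + b') = (a - a') + (b - b') by rewrite opprD addrACA.
exact: rpredD.
Qed.
Lemma cgN d a b : cg d a b -> cg d (- a) (- b).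
Proof. by rewrite /cg -opprD => h; rewrite rpredN. Qed.
Lemma cgB d a b a' b' : cg d a a' -> cg d b b' -> cg d (a - b) (a' - b').
Proof. by move=> h1 h2; apply: cgD => //; apply: cgN. Qed.
Lemma cgM d a b a' b' : cg d a a' -> cg d b b' -> cg d (a * b) (a' * b').
Proof.
rewrite /cg => h1 h2.
have -> : a * b - a' * b' = a * (b - b') + (a - a') * b' by rewrite mulrBr mulrBl addrA subrK.
by apply: rpredD; [apply: dvdz_mull | apply: dvdz_mulr].
Qed.
Lemma cgX d a b n : cg d a b -> cg d (a ^+ n) (b ^+ n).
Proof.
move=> h; elim: n => [|n IH]; first exact: cg_refl.
by rewrite !exprS; apply: cgM.
Qed.
Lemma cg_dvd d d' a b : (d' %| d)%Z -> cg d a b -> cg d' a b.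
Proof. by rewrite /cg => h1 h2; apply: dvdz_trans h1 h2. Qed.
Lemma cg0 d a : (d %| a)%Z -> cg d a 0.
Proof. by rewrite /cg subr0. Qed.
Lemma cg_sum d (I : Type) (r : seq I) (P : pred I) (F G : I -> int) :
  (forall i, P i -> cg d (F i) (G i)) ->
  cg d (\sum_(i <- r | P i) F i) (\sum_(i <- r | P i) G i).
Proof.
move=> h; apply: (big_rec2 (fun x y => cg d x y)); first exact: cg_refl.
by move=> i y1 y2 Pi hy; apply: cgD => //; apply: h.
Qed.
Lemma cg_prod d (I : Type) (r : seq I) (P : pred I) (F G : I -> int) :
  (forall i, P i -> cg d (F i) (G i)) ->
  cg d (\prod_(i <- r | P i) F i) (\prod_(i <- r | P i) G i).
Proof.
move=> h; apply: (big_rec2 (fun x y => cg d x y)); first exact: cg_refl.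
by move=> i y1 y2 Pi hy; apply: cgM => //; apply: h.
Qed.

Lemma eqmodpE p k (u v : Zpad) : eqmodp p k u v = cg (pw p k) (u k) (v k).
Proof. by rewrite /eqmodp eqz_mod_dvd. Qed.

Lemma pwD p a b : pw p (a + b) = pw p a * pw p b.
Proof. by rewrite /pw expnD PoszM. Qed.
Lemma pw_dvd p a b : (a <= b)%N -> (pw p a %| pw p b)%Z.
Proof. by move=> h; rewrite /pw dvdzE /=; apply: dvdn_exp2l. Qed.
Lemma pwS p a : pw p a.+1 = pw p a * p%:Z.
Proof. by rewrite /pw expnS PoszM mulrC. Qed.
Lemma pw0 p : pw p 0 = 1.
Proof. by []. Qed.
Lemma pw1 p : pw p 1 = p%:Z.
Proof. by rewrite /pw expn1. Qed.
Lemma cg_one a b : cg 1 a b.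
Proof. by rewrite /cg dvdzE dvd1n. Qed.

Lemma coherent_le p (u : Zpad) j k : coherent p u -> (j <= k)%N -> cg (pw p j) (u k) (u j).
Proof.
move=> hu; elim: k => [|k IH]; first by rewrite leqn0 => /eqP ->; apply: cg_refl.
rewrite leq_eqVlt => /orP [/eqP ->|]; first exact: cg_refl.
rewrite ltnS => hjk; apply: cg_trans (IH hjk).
have := hu k; rewrite eqz_mod_dvd => h; apply: cg_dvd h; exact: pw_dvd.
Qed.

Lemma lift_p p j a b : (0 < j)%N -> cg (pw p j) a b -> cg (pw p j.+1) (a ^+ p) (b ^+ p).
Proof.
move=> j0 h; rewrite /cg subrXX pwS; apply: dvdz_mul => //.
have hp : cg (p%:Z) a b by apply: cg_dvd h; rewrite -pw1; apply: pw_dvd.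
have h2 : cg (p%:Z) (\sum_(i < p) a ^+ (p.-1 - i) * b ^+ i) (\sum_(i < p) b ^+ (p.-1 - i) * b ^+ i).
  by apply: cg_sum => i _; apply: cgM; [apply: cgX|apply: cg_refl].
have h3 : (p%:Z %| \sum_(i < p) b ^+ (p.-1 - i) * b ^+ i)%Z.
  rewrite (eq_bigr (fun _ => b ^+ p.-1)); last first.
    by move=> i _; rewrite -exprD subnK //; rewrite -ltnS; case: (p) i => [[]|q] //.
  by rewrite sumr_const card_ord -mulr_natl natz; apply: dvdz_mulr.
move: h2; rewrite /cg => h2; have := rpredD h2 h3; by rewrite subrK.
Qed.

Lemma lift_ps p s a b : cg (p%:Z) a b -> cg (pw p s.+1) (a ^+ (p ^ s)) (b ^+ (p ^ s)).
Proof.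
move=> h; elim: s => [|s IH]; first by rewrite expn0 !expr1 pw1.
by rewrite expnSr !exprM; apply: lift_p.
Qed.

Lemma PoszXn (a n : nat) : (a ^ n)%N%:Z = a%:Z ^+ n.
Proof. by rewrite -!natz natrX. Qed.

Lemma fermat_cg p (a : nat) : prime p -> cg (p%:Z) (a%:Z ^+ p) (a%:Z).
Proof.
move=> pp; rewrite /cg -eqz_mod_dvd -PoszXn !modz_nat; apply/eqP; congr Posz.
exact: fermat_little.
Qed.

Lemma vec_ofS m N (t : {ffun 'I_m -> 'I_N.+1}) (i : 'I_m) : vec_of t i.+1 = t i.
Proof.
rewrite /vec_of; case: insubP => [o _ /= ho|]; last by rewrite ltn_ord.
by rewrite (val_inj ho).
Qed.

Lemma vec_of_le m N (t : {ffun 'I_m -> 'I_N.+1}) i : (vec_of t i <= N)%N.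
Proof.
case: i => [|i] //=; case: insubP => [o _ _|_] //=.
by rewrite -ltnS.
Qed.

Lemma vec_of_out m N (t : {ffun 'I_m -> 'I_N.+1}) i : (m < i)%N -> vec_of t i = 0%N.
Proof.
case: i => [|i] //= hi; rewrite insubF //; by rewrite ltnNge -ltnS hi.
Qed.

Lemma boxsum_cg d n N F G :
  (forall t : {ffun 'I_n.-1 -> 'I_N.+1}, cg d (F (vec_of t)) (G (vec_of t))) ->
  cg d (boxsum n N F) (boxsum n N G).
Proof. by move=> h; apply: cg_sum => t _; apply: h. Qed.

Lemma boxsum_tail d n M N F : (M <= N)%N ->
  (forall t : {ffun 'I_n.-1 -> 'I_N.+1}, ~~ [forall i, t i <= M]%N -> (d %| F (vec_of t))%Z) ->
  cg d (boxsum n N F) (boxsum n M F).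
Proof.
move=> hMN h; rewrite /boxsum (bigID (fun t : {ffun 'I_n.-1 -> 'I_N.+1} => [forall i, t i <= M]%N)) /=.
rewrite -[X in cg d _ X]addr0; apply: cgD; last first.
  by apply: cg0; apply: rpred_sum => t ht; apply: h.
have hw : (M.+1 <= N.+1)%N by rewrite ltnS.
pose hf (t : {ffun 'I_n.-1 -> 'I_M.+1}) : {ffun 'I_n.-1 -> 'I_N.+1} :=
  [ffun i => widen_ord hw (t i)].
pose hg (u : {ffun 'I_n.-1 -> 'I_N.+1}) : {ffun 'I_n.-1 -> 'I_M.+1} :=
  [ffun i => inord (u i)].
rewrite (reindex_onto hf hg); last first.
  move=> u /forallP hu; apply/ffunP => i; rewrite !ffunE; apply: val_inj => /=.
  by rewrite inordK // ltnS hu.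
have hv : forall t, vec_of (hf t) = vec_of t.
  move=> t; apply: functional_extensionality => i; case: i => [|i] //=.
  rewrite /vec_of; case: (insub i) => [o|] //=; by rewrite ffunE.
under eq_bigr => j _ do rewrite hv.
rewrite (eq_bigl (fun _ => true)); first exact: cg_refl.
move=> t /=; apply/andP; split.
  by apply/forallP => i; rewrite ffunE /= -ltnS.
apply/eqP/ffunP => i; rewrite !ffunE; by rewrite inord_val.
Qed.

Lemma cg_prod_nat d (m k : nat) (P : pred nat) (F G : nat -> int) :
  (forall i, (m <= i < k)%N -> P i -> cg d (F i) (G i)) ->
  cg d (\prod_(m <= i < k | P i) F i) (\prod_(m <= i < k | P i) G i).
Proof.
move=> h; rewrite big_seq_cond [X in cg d _ X]big_seq_cond.
by apply: cg_prod => i /andP [hi Pi]; apply: h => //; rewrite -mem_index_iota.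
Qed.

Lemma Qterm_cg d n l bin bin' x x' j a M :
  (0 < l)%N -> (0 < j)%N ->
  (forall i, (0 < i < n)%N -> cg d (x i) (x' i)) ->
  (forall e m, (e <= 1)%N -> (m <= M)%N -> cg d (bin e m) (bin' e m)) ->
  (forall i, (a i <= M)%N) ->
  cg d (Qterm n l bin x j a) (Qterm n l bin' x' j a).
Proof.
move=> l0 j0 hx hb ha; rewrite /Qterm.
case: ifP => _; last exact: cg_refl.
apply: cgM; [apply: cgM|].
- case: ifP => hj; last exact: cg_refl.
  by apply: hx; lia.
- rewrite /coefQ; case: ifP => hj.
    apply: cgM; first exact: hb.
    by apply: cg_prod_nat => i _ _; apply: hb.
  by apply: cg_prod_nat => i _ _; apply: hb.
- rewrite /Xmon; apply: cgM; apply: cg_prod_nat => i hi _; apply: cgX; apply: hx; lia.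
Qed.

Lemma leq_sum_nat_term (a : nat -> nat) m k i : (m <= i < k)%N ->
  (a i <= \sum_(m <= j < k) a j)%N.
Proof.
move=> /andP [h1 h2]; rewrite (big_cat_nat (n := i)) /=; [|lia|lia].
rewrite (@big_ltn _ _ _ i); [lia|lia].
Qed.

Lemma Qterm_tail p k n l bin x j a :
  (0 < l)%N -> (2 * l < n)%N ->
  (forall i, (1 < i < n)%N -> (p%:Z %| x i)%Z) ->
  (exists2 i, (0 < i < n)%N & (k + l < a i)%N) ->
  (pw p k %| Qterm n l bin x j a)%Z.
Proof.
move=> l0 ln hx [i hi hai]; rewrite /Qterm.
case: ifP => hc; last exact: dvdz0.
apply: dvdz_mull; rewrite /Xmon; apply: dvdz_mull.
set R := (\sum_((n - 2 * l).+1 <= i < n) a i)%N.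
have hR : (k <= R)%N.
  move: hc; rewrite /cond => /eqP hc.
  have hcl : ((if (j <= n - 2 * l)%N then (l - 1)%N else l) <= l)%N by case: ifP; lia.
  case: (leqP i (n - 2 * l)) => hi2.
    have := leq_sum_nat_term a (m := 1) (k := (n - 2 * l).+1) (i := i); rewrite hc -/R; lia.
  have := leq_sum_nat_term a (m := (n - 2 * l).+1) (k := n) (i := i); rewrite -/R; lia.
apply: dvdz_trans (pw_dvd p hR) _.
rewrite /R !big_seq.
apply: (big_rec2 (fun s (y : int) => (pw p s %| y)%Z)) => //.
move=> i' s y hi' hy; rewrite pwD; apply: dvdz_mul => //.
rewrite /pw PoszXn; apply: dvdz_exp2r; apply: hx.
move: hi'; rewrite mem_index_iota; lia.
Qed.

Lemma val_lemma p s k (X : int) (D : nat) : prime p -> (0 < D)%N -> (k + D <= s)%N ->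
  (pw p s %| X * D%:Z)%Z -> (pw p k %| X)%Z.
Proof.
move=> pp D0 hs h; have [->|X0] := eqVneq X 0; first exact: dvdz0.
move: h; rewrite /pw !dvdzE abszM /= => h.
have Xp : (0 < `|X|)%N by rewrite absz_gt0.
rewrite pfactor_dvdn //; move: h; rewrite pfactor_dvdn ?muln_gt0 ?Xp ?D0 // lognM //.
have : (logn p D < D)%N.
  have p1 : (1 < p)%N by apply: prime_gt1.
  apply: (@leq_trans (p ^ logn p D)); first exact: ltn_expl.
  by apply: dvdn_leq => //; apply: pfactor_dvdnn.
lia.
Qed.

Lemma intrPosz (R : pzRingType) (n : nat) : (Posz n)%:~R = n%:R :> R.
Proof. by []. Qed.

Definition gq (e m : nat) : rat := gbin (- (2%:R)^-1 - e%:R) m.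
Definition cc (e i : nat) : int := (1 + 2 * e + 2 * i)%N%:Z.

Lemma gq_prod0 e m : gq e m * ((2 ^ m * m`!)%N)%:R =
   \prod_(i < m) (- ((1 + 2 * e + 2 * i)%N%:R : rat)).
Proof.
rewrite /gq /gbin natrM (mulrC (2 ^ m)%:R) mulrA.
have f0 : (m`!)%:R != 0 :> rat by rewrite pnatr_eq0 -lt0n fact_gt0.
rewrite divfK // mulrC.
have -> : (2 ^ m)%:R = \prod_(i < m) (2 : rat).
  by rewrite prodr_const card_ord natrX.
rewrite -big_split /=; apply: eq_bigr => i _.
rewrite !mulrnDr ?mulr0n ?addr0.
by field.
Qed.

Lemma gq_prod e m : gq e m * ((2 ^ m * m`!)%N)%:R = (\prod_(i < m) (- cc e i))%:~R.
Proof.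
rewrite gq_prod0 rmorph_prod; apply: eq_bigr => i _.
by rewrite rmorphN.
Qed.

Lemma bin_prod N m : ('C(N, m))%:Z * ((2 ^ m * m`!)%N)%:Z = \prod_(i < m) ((2 * (N - i))%N)%:Z.
Proof.
rewrite -PoszM mulnCA bin_ffact ffact_prod.
have -> : (2 ^ m = \prod_(i < m) 2)%N by rewrite prod_nat_const card_ord.
rewrite -big_split /= -!natz natr_prod; apply: eq_bigr => i _; exact: natz.
Qed.

Lemma numD e m : numq (gq e m) * ((2 ^ m * m`!)%N)%:Z = denq (gq e m) * \prod_(i < m) (- cc e i).
Proof.
apply: (@intr_inj rat); rewrite !rmorphM /= numqE.
have hD : ((2 ^ m)%N%:~R * m`!%:~R : rat) = ((2 ^ m * m`!)%N)%:R by rewrite natrM.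
rewrite hD -gq_prod; ring.
Qed.

Lemma binom_main p s e m : (m + e <= ((p ^ s).-1)./2)%N -> (e <= 1)%N -> odd p ->
  (pw p s %| ((('C(((p ^ s).-1)./2 - e, m))%:Z * denq (gq e m) - numq (gq e m)) * ((2 ^ m * m`!)%N)%:Z))%Z.
Proof.
move=> hm he op; set q := gq e m.
set N := (((p ^ s).-1)./2 - e)%N.
set D := ((2 ^ m * m`!)%N)%:Z.
have ops : odd (p ^ s) by rewrite oddX op orbT.
have h2 : (((p ^ s).-1)./2 = (p ^ s)./2)%N.
  by rewrite -{1}(odd_double_half (p ^ s)) ops /= doubleK.
have hP := odd_double_half (p ^ s); rewrite ops in hP.
have hN : (2 * N + 1 + 2 * e = p ^ s)%N.
  rewrite -hP /N h2; move: hm; rewrite h2 -!muln2; lia.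
have hmN : (m <= N)%N by rewrite /N; lia.
rewrite mulrBl -mulrA (mulrC (denq q)) mulrA bin_prod /q numD.
rewrite (mulrC (\prod_(i < m) _)) -mulrBr; apply: dvdz_mull.
have := @cg_prod (pw p s) _ (index_enum 'I_m) xpredT (fun i : 'I_m => ((2 * (N - i))%N)%:Z)
   (fun i : 'I_m => - cc e i).
rewrite /cg; apply => i _.
have hi : (i < m)%N by [].
have -> : ((2 * (N - i))%N)%:Z - - cc e i = pw p s.
  rewrite /cc /pw -hN; lia.
exact: dvdzz.
Qed.

Lemma pow_ge p s : (3 <= p)%N -> (2 * s + 1 <= p ^ s)%N.
Proof.
move=> p3; elim: s => [|s IH]; first by rewrite expn0.
rewrite expnS; nia.
Qed.

Lemma mu_ge p s : (3 <= p)%N -> (s <= ((p ^ s).-1)./2)%N.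
Proof.
move=> p3; rewrite geq_half_double; have := pow_ge s p3; rewrite -muln2; lia.
Qed.

Lemma invmodP p k (d : int) : coprime `|d| p ->
  (pw p k %| invmod d (pw p k) * d - 1)%Z.
Proof.
move=> cd; rewrite /invmod; case: egcdzP => u v /= h _.
have g1 : gcdz d (pw p k) = 1.
  by rewrite /gcdz /pw /=; have := coprimeXr k cd; rewrite /coprime => /eqP ->.
move: h; rewrite g1 => h.
have -> : u * d - 1 = - v * pw p k by rewrite -h; ring.
by apply: dvdz_mull; apply: dvdzz.
Qed.

Lemma gq_coprime p e m : prime p -> odd p -> (e <= 1)%N -> coprime `|denq (gq e m)| p.
Proof.
move=> pp op he.
have p3 : (3 <= p)%N.
  have := prime_gt1 pp; case: (p) op => [|[|[|q]]] //.
set D := (2 ^ m * m`!)%N.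
have D0 : (0 < D)%N by rewrite muln_gt0 expn_gt0 fact_gt0.
set s := (D + m + 2)%N.
have hs : (m + e <= ((p ^ s).-1)./2)%N.
  apply: leq_trans (mu_ge s p3); rewrite /s; lia.
have := binom_main hs he op; rewrite -/D => h.
have hX : (pw p 1 %| 'C(((p ^ s).-1)./2 - e, m)%:Z * denq (gq e m) - numq (gq e m))%Z.
  by apply: (val_lemma pp D0 _ h); rewrite /s; lia.
rewrite pw1 in hX.
rewrite coprime_sym prime_coprime //; apply/negP => hd.
have hd' : (p%:Z %| 'C(((p ^ s).-1)./2 - e, m)%:Z * denq (gq e m))%Z.
  by apply: dvdz_mull; rewrite dvdzE.
have hn : (p%:Z %| numq (gq e m))%Z.
  have := rpredB hd' hX; by rewrite opprB addrC subrK.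
have := coprime_num_den (gq e m); rewrite /coprime => /eqP hg.
have : (p %| gcdn `|numq (gq e m)| `|denq (gq e m)|)%N by rewrite dvdn_gcd hd andbT; exact: hn.
rewrite hg dvdn1 => /eqP p1; by rewrite p1 in pp.
Qed.

Lemma gq_cg p k s e m : prime p -> odd p -> (e <= 1)%N ->
  (k + (2 ^ m * m`!) <= s)%N -> (m + e <= ((p ^ s).-1)./2)%N ->
  cg (pw p k) ('C(((p ^ s).-1)./2 - e, m))%:Z (rat_to_Zp p (gq e m) k).
Proof.
move=> pp op he hs hm.
have D0 : (0 < 2 ^ m * m`!)%N by rewrite muln_gt0 expn_gt0 fact_gt0.
have hX := val_lemma pp D0 hs (binom_main hm he op).
have hu := invmodP k (gq_coprime m pp op he).
rewrite /cg /rat_to_Zp.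
set C := ('C(_, _))%:Z in hX *; set u := invmod _ _ in hu *.
set d := denq _ in hX hu *; set n := numq _ in hX *.
have -> : C - n * u = (C * d - n) * u - C * (u * d - 1) by ring.
by apply: rpredB; [apply: dvdz_mulr | apply: dvdz_mull].
Qed.

Lemma rat_to_Zp_coh p k (q : rat) : coprime `|denq q| p ->
  cg (pw p k) (rat_to_Zp p q k.+1) (rat_to_Zp p q k).
Proof.
move=> cd; rewrite /cg /rat_to_Zp.
have h1 := invmodP k cd; have h2 := invmodP k.+1 cd.
have h2' : (pw p k %| invmod (denq q) (pw p k.+1) * denq q - 1)%Z.
  by apply: dvdz_trans h2; apply: pw_dvd.
set u := invmod _ (pw p k) in h1 *; set u' := invmod _ _ in h2' *.
have -> : numq q * u' - numq q * u = numq q * ((u' * denq q - 1) * u - u' * (u * denq q - 1)) by ring.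
by apply: dvdz_mull; apply: rpredB; [apply: dvdz_mulr | apply: dvdz_mull].
Qed.

Definition ee (p s : nat) : nat := ((p ^ s).-1)./2.

Lemma odd_split m : odd m -> m = (m./2).*2.+1.
Proof. by move=> om; rewrite -{1}(odd_double_half m) om. Qed.

Lemma ee_step p s : odd p -> ee p s.+1 = (ee p s + p ^ s * p./2)%N.
Proof.
move=> op; rewrite /ee.
have oP : odd (p ^ s) by rewrite oddX op orbT.
have hP := odd_split oP; have hp := odd_split op.
set A := (p ^ s)./2 in hP; set h := p./2 in hp *.
have -> : ((p ^ s).-1)./2 = A by rewrite hP /= doubleK.
rewrite expnSr hP {1}hp.
have -> : ((A.*2.+1 * h.*2.+1).-1 = (A + A.*2.+1 * h).*2)%N.
  rewrite -!muln2; nia.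
by rewrite doubleK.
Qed.



Lemma ee_Xpow p s : odd p -> (1 + 2 * ee p s = p ^ s)%N.
Proof.
move=> op; rewrite /ee.
have oP : odd (p ^ s) by rewrite oddX op orbT.
have hP := odd_split oP.
have -> : ((p ^ s).-1)./2 = (p ^ s)./2 by rewrite {1}hP /= doubleK.
rewrite [in RHS]hP -muln2; lia.
Qed.

Lemma ee_cg p s (T : int) : odd p -> cg (p%:Z) (T ^+ p./2) 1 ->
  cg (pw p s.+1) (T ^+ ee p s.+1) (T ^+ ee p s).
Proof.
move=> op h; rewrite ee_step // exprD mulnC exprM.
rewrite -[X in cg _ _ X]mulr1; apply: cgM; first exact: cg_refl.
have := lift_ps s h; by rewrite expr1n.
Qed.

Lemma ee_le p k s (T : int) : odd p -> cg (p%:Z) (T ^+ p./2) 1 -> (k <= s)%N ->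
  cg (pw p k) (T ^+ ee p s) (T ^+ ee p k).
Proof.
move=> op h; elim: s => [|s IH]; first by rewrite leqn0 => /eqP ->; apply: cg_refl.
rewrite leq_eqVlt => /orP [/eqP ->|]; first exact: cg_refl.
rewrite ltnS => hks; apply: cg_trans (IH hks).
by apply: cg_dvd (ee_cg s op h); apply: pw_dvd; apply: leqW.
Qed.

Lemma ee_1 p : odd p -> ee p 1 = p./2.
Proof.
move=> op; have := ee_Xpow 1 op; have hp := odd_split op; rewrite expn1 => h.
move: h; rewrite {2}hp -muln2; lia.
Qed.

Lemma teich_step p k (c : int) : cg (p%:Z) (c ^+ p) c ->
  cg (pw p k.+1) (c ^+ (p ^ k.+1)) (c ^+ (p ^ k)).
Proof. by move=> h; have := lift_ps k h; rewrite -exprM -expnS. Qed.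

Definition yy p (g : int) (t : Zpad) : Zpad := fun k => g ^+ (p ^ k) * t k ^+ ee p k.
Definition rr p (g : int) (t : Zpad) : Zpad := fun k => t k * yy p g t k.

Lemma sqrt_facts p (c g : int) (t : Zpad) : prime p -> odd p ->
  cg (p%:Z) (c * g) 1 -> cg (p%:Z) (c ^+ p) c -> cg (p%:Z) (g ^+ p) g ->
  coherent p t -> cg (p%:Z) (t 1%N) (c ^+ 2) ->
  [/\ coherent p (yy p g t), coherent p (rr p g t),
      cg (p%:Z) (rr p g t 1%N) c,
      Zeq p (Zmul (rr p g t) (rr p g t)) t &
      Zeq p (Zmul (rr p g t) (yy p g t)) (Zcst 1) /\
      forall k s, (k <= s)%N -> cg (pw p k) (t k ^+ ee p s) (c ^+ (p ^ k) * yy p g t k)].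
Proof.
move=> pp op hcg hcp hgp cht ht1.
have p0 : (0 < p)%N by apply: prime_gt0.
have ht : forall k, (0 < k)%N -> cg (p%:Z) (t k) (c ^+ 2).
  by move=> k k0; apply: cg_trans ht1; rewrite -pw1; apply: coherent_le.
have hc1 : cg (p%:Z) (c ^+ p.-1) 1.
  apply: cg_trans (hcg); rewrite -[X in cg _ X _]mulr1.
  apply: cg_trans (cgM (cg_refl _ (c ^+ p.-1)) (cg_sym hcg)) _.
  rewrite mulrA -exprSr prednK //; apply: cgM => //; exact: cg_refl.
have hz : forall k, (0 < k)%N -> cg (p%:Z) (t k ^+ p./2) 1.
  move=> k k0; apply: cg_trans hc1.
  have -> : p.-1 = (2 * p./2)%N by rewrite {1}(odd_split op) /= mul2n.
  by rewrite exprM; apply: cgX; apply: ht.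
have hcgk : forall k, cg (pw p k.+1) ((c * g) ^+ (p ^ k)) 1.
  by move=> k; have := lift_ps k hcg; rewrite expr1n.
have hry : forall k, cg (pw p k) (rr p g t k * yy p g t k) 1.
  case=> [|k]; first exact: cg_one.
  rewrite /rr /yy.
  have -> : t k.+1 * (g ^+ (p ^ k.+1) * t k.+1 ^+ ee p k.+1) *
      (g ^+ (p ^ k.+1) * t k.+1 ^+ ee p k.+1) =
      (g ^+ (p ^ k.+1)) ^+ 2 * t k.+1 ^+ (1 + 2 * ee p k.+1)%N.
    by rewrite exprD mulnC exprM expr1; ring.
  rewrite ee_Xpow //.
  have h1 := lift_ps k.+1 (ht k.+1 isT).
  apply: cg_dvd (pw_dvd p (leqnSn k.+1)) _.
  apply: cg_trans (cgM (cg_refl _ _) h1) _.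
  have -> : g ^+ (p ^ k.+1) ^+ 2 * c ^+ 2 ^+ (p ^ k.+1) = ((c * g) ^+ (p ^ k.+1)) ^+ 2.
    by rewrite -!exprM mulnC exprMn mulrC.
  by have := cgX 2 (hcgk k.+1); rewrite expr1n.
have cy : coherent p (yy p g t).
  case=> [|k]; rewrite eqz_mod_dvd -/(cg _ _ _); first exact: cg_one.
  rewrite /yy; apply: cgM.
    by apply: cg_dvd (teich_step k.+1 hgp); apply: pw_dvd; apply: leqW.
  apply: cg_trans (_ : cg _ _ (t k.+1 ^+ ee p k.+2)) _.
    apply: cgX; have := cht k.+1; by rewrite eqz_mod_dvd.
  by apply: cg_dvd (ee_cg k.+1 op (hz k.+1 isT)); apply: pw_dvd; apply: leqW.
have cr : coherent p (rr p g t).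
  move=> k; rewrite eqz_mod_dvd -/(cg _ _ _) /rr; apply: cgM.
    by have := cht k; rewrite eqz_mod_dvd.
  by have := cy k; rewrite eqz_mod_dvd.
split => //.
- rewrite /rr /yy expn1 ee_1 //.
  apply: cg_trans (_ : cg _ _ (c ^+ 2 * (g * 1))) _.
    apply: cgM; [exact: ht | apply: cgM; [exact: hgp | exact: hz]].
  have -> : c ^+ 2 * (g * 1) = c * (c * g) by rewrite mulr1 expr2 mulrA.
  rewrite -[X in cg _ _ X]mulr1; apply: cgM => //; exact: cg_refl.
- move=> k; rewrite eqmodpE /Zmul.
  have -> : rr p g t k * rr p g t k = t k * (rr p g t k * yy p g t k) by rewrite /rr; ring.
  rewrite -[X in cg _ _ X]mulr1; apply: cgM; [exact: cg_refl|exact: hry].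
split; first by move=> k; rewrite eqmodpE /Zmul /Zcst; apply: hry.
move=> k s hks; case: k hks => [|k] hks; first exact: cg_one.
  apply: cg_trans (ee_le op (hz k.+1 isT) hks) _.
  rewrite /yy mulrA -exprMn; apply: cg_sym.
  rewrite -[X in cg _ _ X]mul1r; apply: cgM; last exact: cg_refl.
  by apply: cg_dvd (hcgk k.+1); apply: pw_dvd; apply: leqW.
Qed.

Lemma leq_fact m k : (m <= k)%N -> (m`! <= k`!)%N.
Proof.
elim: k => [|k IH]; first by rewrite leqn0 => /eqP ->.
rewrite leq_eqVlt => /orP [/eqP ->|]; first by [].
rewrite ltnS => h; apply: leq_trans (IH h) _; rewrite factS leq_pmull //.
Qed.

Lemma Qsum_tail p n l bin (xk : nat -> int) j K M N :
  (0 < l)%N -> (2 * l < n)%N -> (forall i, (1 < i < n)%N -> (p%:Z %| xk i)%Z) ->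
  (K + l <= M)%N -> (M <= N)%N ->
  cg (pw p K) (boxsum n N (Qterm n l bin xk j)) (boxsum n M (Qterm n l bin xk j)).
Proof.
move=> l0 ln hx hK hMN; apply: boxsum_tail => // t /forallPn [i hi].
apply: Qterm_tail => //; exists i.+1.
  by apply/andP; split => //; have := ltn_ord i; lia.
by rewrite vec_ofS; rewrite -ltnNge in hi; lia.
Qed.

Lemma Qsum_cg d n l bin bin' (xk xk' : nat -> int) j M :
  (0 < l)%N -> (0 < j)%N ->
  (forall i, (0 < i < n)%N -> cg d (xk i) (xk' i)) ->
  (forall e m, (e <= 1)%N -> (m <= M)%N -> cg d (bin e m) (bin' e m)) ->
  cg d (boxsum n M (Qterm n l bin xk j)) (boxsum n M (Qterm n l bin' xk' j)).
Proof.
move=> l0 j0 hx hb; apply: boxsum_cg => t; apply: (Qterm_cg (M := M)) => //.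
by move=> i; apply: vec_of_le.
Qed.

Definition qq p n l (x : nat -> Zpad) j : Zpad := fun k => Ql_partial p n l (k + l) x j k.

Lemma xdiv p n (x : nat -> Zpad) k i :
  (forall i, (0 < i < n)%N -> coherent p (x i)) ->
  (forall i, (1 < i < n)%N -> eqmodp p 1 (x i) (Zcst 0)) ->
  (0 < k)%N -> (1 < i < n)%N -> (p%:Z %| x i k)%Z.
Proof.
move=> hc h0 k0 hi.
have h1 : cg (pw p 1) (x i k) (x i 1%N) by apply: coherent_le => //; apply: hc; lia.
have h2 := h0 i hi; rewrite eqmodpE in h2.
have := cg_trans h1 h2; rewrite pw1 /Zcst /cg subr0; exact.
Qed.

Lemma qq_coh p n l (x : nat -> Zpad) j : prime p -> odd p -> (0 < l)%N -> (2 * l < n)%N -> (0 < j)%N ->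
  (forall i, (0 < i < n)%N -> coherent p (x i)) ->
  (forall i, (1 < i < n)%N -> eqmodp p 1 (x i) (Zcst 0)) ->
  coherent p (qq p n l x j).
Proof.
move=> pp op l0 ln j0 hc h0 k; rewrite eqz_mod_dvd -/(cg _ _ _) /qq /Ql_partial.
apply: cg_trans.
  apply: (@Qsum_tail p n l _ _ j k (k + l)%N) => //; try lia.
  by move=> i hi; apply: (xdiv hc h0).
apply: Qsum_cg => //.
  by move=> i hi; have := hc i hi k; rewrite eqz_mod_dvd.
move=> e m he hm; apply: rat_to_Zp_coh.
exact: (gq_coprime m pp op he).
Qed.

Lemma qq_series p n l (x : nat -> Zpad) j : prime p -> odd p -> (0 < l)%N -> (2 * l < n)%N -> (0 < j)%N ->
  (forall i, (0 < i < n)%N -> coherent p (x i)) ->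
  (forall i, (1 < i < n)%N -> eqmodp p 1 (x i) (Zcst 0)) ->
  IsSeriesSum p n l x j (qq p n l x j).
Proof.
move=> pp op l0 ln j0 hc h0; split; first exact: qq_coh.
move=> k; exists (k + l)%N => N hN; rewrite eqmodpE /qq.
case: k hN => [|k] hN; first exact: cg_one.
apply: Qsum_tail => //.
by move=> i hi; apply: (xdiv hc h0).
Qed.

Lemma qls_cg p n l (x : nat -> Zpad) j k s : prime p -> odd p -> (0 < l)%N -> (2 * l < n)%N -> (0 < j)%N ->
  (forall i, (0 < i < n)%N -> coherent p (x i)) ->
  (forall i, (1 < i < n)%N -> eqmodp p 1 (x i) (Zcst 0)) ->
  (k + 2 ^ (k + l) * (k + l)`! + (k + l) + 1 <= s)%N ->
  cg (pw p k) (Qls p n l s x j k) (qq p n l x j k).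
Proof.
move=> pp op l0 ln j0 hc h0 hs.
case: k hs => [|k] hs; first exact: cg_one.
have p3 : (3 <= p)%N.
  have := prime_gt1 pp; case: (p) op => [|[|[|q]]] //.
have hmu := mu_ge s p3.
rewrite /Qls /qq /Ql_partial.
apply: cg_trans.
  apply: (@Qsum_tail p n l _ _ j k.+1 (k.+1 + l)%N) => //; try lia.
  by move=> i hi; apply: (xdiv hc h0).
apply: Qsum_cg => //; first by move=> i hi; exact: cg_refl.
move=> e m he hm; rewrite natz.
apply: gq_cg => //; last by lia.
have : (2 ^ m * m`! <= 2 ^ (k.+1 + l) * (k.+1 + l)`!)%N.
  by apply: leq_mul; [apply: leq_pexp2l | apply: leq_fact].
lia.
Qed.

Lemma coherent_mul p (u v : Zpad) : coherent p u -> coherent p v -> coherent p (Zmul u v).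
Proof.
move=> hu hv k; rewrite eqz_mod_dvd -/(cg _ _ _) /Zmul; apply: cgM.
  by have := hu k; rewrite eqz_mod_dvd.
by have := hv k; rewrite eqz_mod_dvd.
Qed.

Lemma cg_modn p m : cg (p%:Z) ((m %% p)%N%:Z) (m%:Z).
Proof. by rewrite /cg -eqz_mod_dvd -modz_nat modz_mod. Qed.

Unset Implicit Arguments.
Theorem theorem10p5 (p g l : nat) (beta : 'F_p) :
  prime p -> odd p -> (0 < g)%N -> ((2 * g).+1 < p)%N ->
  (1 <= l <= g)%N -> beta != 0 ->
  exists (w : Zpad) (J : (nat -> Zpad) -> nat -> Zpad),
    [/\ IsTeich p beta w,
        (forall x, inD p (2 * g).+1 (beta ^+ 2) x ->
           forall j, (1 <= j <= (2 * g).+1)%N ->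
           IsJl p (2 * g).+1 l beta x j (J x j)) &
        (forall k, exists S, forall s, (S <= s)%N -> (0 < s)%N ->
           forall x, inD p (2 * g).+1 (beta ^+ 2) x ->
           forall j, (1 <= j <= (2 * g).+1)%N ->
           eqmodp p k (Jls p (2 * g).+1 l s x j) (Zmul w (J x j)))].
Proof.
move=> pp op g0 gp /andP [l1 lg] b0.
set n := (2 * g).+1.
have l0 : (0 < l)%N by [].
have ln : (2 * l < n)%N by rewrite /n; lia.
set b : nat := nat_of_ord beta.
have bp : (b < p)%N by have := ltn_ord beta; move=> h; apply: leq_trans h _; rewrite Fp_cast.
have bn0 : b != 0%N.
  apply: contra b0 => h; apply/eqP; apply: val_inj => /=; exact/eqP.
set c : int := b%:Z.
set gg : int := (b ^ (p - 2))%N%:Z.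
have f1 : cg (p%:Z) (c ^+ p) c by apply: fermat_cg.
have f2 : cg (p%:Z) (gg ^+ p) gg by apply: fermat_cg.
have f3 : cg (p%:Z) (c * gg) 1.
  have -> : c * gg = c ^+ p.-1.
    rewrite /c /gg -PoszXn -PoszM -expnS; congr (Posz (_ ^ _)).
    have := prime_gt1 pp; lia.
  have hcop : coprimez (p%:Z) c.
    rewrite coprimezE /= prime_coprime //.
    apply/negP => /dvdn_leq; rewrite lt0n bn0 => /(_ isT); lia.
  rewrite /cg -(Gauss_dvdzr _ hcop) mulrBr mulr1 -exprS prednK ?prime_gt0 //.
have hinD : forall x, inD p n (beta ^+ 2) x ->
    [/\ coherent p (x 1%N), cg (p%:Z) (x 1%N 1%N) (c ^+ 2),
        (forall i, (0 < i < n)%N -> coherent p (x i)) &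
        (forall i, (1 < i < n)%N -> eqmodp p 1 (x i) (Zcst 0))].
  move=> x [hc [h1 h0]]; split => //; first by apply: hc; apply/andP; split => //; rewrite /n; lia.
  move: h1; rewrite eqmodpE pw1 /Zcst => h1; apply: cg_trans h1 _.
  have -> : nat_of_ord (beta ^+ 2) = (b * b %% p)%N.
    by rewrite expr2 /=; congr (_ %% _)%N; exact: Fp_cast.
  by rewrite expr2 -PoszM; apply: cg_modn.
exists (fun k => c ^+ (p ^ k)), (fun x j => Zmul (yy p gg (x 1%N)) (qq p n l x j)).
split.
- split; [|split].
  + move=> k; rewrite eqz_mod_dvd -/(cg _ _ _).
    by apply: cg_dvd (teich_step k f1); apply: pw_dvd.
  + move=> k; rewrite eqmodpE -exprM -expnSr.
    by apply: cg_dvd (teich_step k f1); apply: pw_dvd.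
  + by rewrite eqmodpE pw1 expn1.
- move=> x hx j /andP [j1 jn].
  case: (hinD x hx) => hc1 ht1 hc h0.
  case: (sqrt_facts pp op f3 f1 f2 hc1 ht1) => cy cr r1 rr1 [ry _].
  split; first by apply: coherent_mul => //; apply: qq_coh.
  exists (rr p gg (x 1%N)), (yy p gg (x 1%N)), (qq p n l x j).
  split; [done|split; [done|split; [by rewrite eqmodpE pw1|split; [done|split; [done|split]]]]].
    exact: qq_series.
  by move=> k; rewrite eqmodpE; apply: cg_refl.
- move=> k; exists (k + 2 ^ (k + l) * (k + l)`! + (k + l) + 1)%N => s hs s0 x hx j /andP [j1 jn].
  case: (hinD x hx) => hc1 ht1 hc h0.
  case: (sqrt_facts pp op f3 f1 f2 hc1 ht1) => cy cr r1 rr1 [ry hlim].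
  rewrite eqmodpE /Jls /Zmul mulrA.
  apply: cgM; first by apply: hlim; lia.
  exact: qls_cg.
Qed.
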